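(* Let $S$ be a powerful set with ground set $E$. For every $e\in E$, both the contraction $S/e$ and the deletion $S\setminus e$ are powerful multisets.
   Context: A set $S\subseteq 2^E$ is powerful if for every $X\subseteq E$ the number of members of $S$ contained in $X$ is a power of 2; view it as a multiset with $\{0,1\}$-valued indicator function $f$. For a multiset over $E$ with indicator function $f$ (multiplicities), assuming $f(\emptyset)\ne0$, it is a powerful multiset if $\log_2\Big(\sum_{Y\subseteq E} f(Y)\big/\sum_{Y\subseteq E\setminus X} f(Y)\Big)$ is an integer for all $X\subseteq E$. For $e\in E$, the contraction $S/e$ is the multiset over $E\setminus\{e\}$ with indicator function $(f/e)(X)=f(X)$, and the deletion $S\setminus e$ is the multiset over $E\setminus\{e\}$ with indicator function $(f\setminus e)(X)=f(X)+f(X\cup\{e\})$, for $X\subseteq E\setminus\{e\}$. *)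

(* Defs.v *)
From mathcomp Require Import all_boot all_order all_algebra.
Set Implicit Arguments. Unset Strict Implicit. Unset Printing Implicit Defensive.
Import Order.TTheory GRing.Theory Num.Theory.

Definition powerful_set (E : finType) (S : {set {set E}}) : Prop :=
  forall X : {set E}, exists k : nat, #|[set Y in S | Y \subset X]| = 2 ^ k.

(* A multiset over a ground set D ⊆ T is given by its multiplicity function
   f : {set T} -> nat; only the values on subsets of D matter. *)
Definition indicator (E : finType) (S : {set {set E}}) : {set E} -> nat :=
  fun Y => nat_of_bool (Y \in S).

Definition powerful_multiset (T : finType) (D : {set T}) (f : {set T} -> nat)
  : Prop :=
  f set0 <> 0%N /\
  forall X : {set T}, X \subset D ->
    exists k : int,
      (((\sum_(Y : {set T} | Y \subset D) f Y)%:R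
        / (\sum_(Y : {set T} | Y \subset D :\: X) f Y)%:R : rat)
       = (2%:R : rat) ^ k)%R.

Definition contraction (T : finType) (f : {set T} -> nat) (e : T)
  : {set T} -> nat := fun X => f X.

Definition deletion (T : finType) (f : {set T} -> nat) (e : T)
  : {set T} -> nat := fun X => (f X + f (e |: X))%N.

(* Main.v *)
Require Import Defs.
From mathcomp Require Import all_boot all_order all_algebra.
Import GRing.Theory.

Lemma cnt_sum (T : finType) (S : {set {set T}}) (A : {set T}) :
  (\sum_(Y : {set T} | Y \subset A) indicator S Y)%N = #|[set Y in S | Y \subset A]|.
Proof.
rewrite -sum1_card (eq_bigl (fun Y => (Y \in S) && (Y \subset A))); last first.
  by move=> Y; rewrite !inE.
rewrite big_mkcondl; apply: eq_bigr => Y _; rewrite /indicator; by case: (Y \in S).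
Qed.

Lemma ratio2 (a b : nat) :
  (((2 ^ a)%N%:R / (2 ^ b)%N%:R : rat) = (2%:R : rat) ^ (a%:Z - b%:Z))%R.
Proof.
by rewrite expfzDr // -invr_expz !natrX.
Qed.

Lemma del_sum (T : finType) (S : {set {set T}}) (e : T) (A : {set T}) :
  e \notin A ->
  (\sum_(Y : {set T} | Y \subset A) deletion (indicator S) e Y)%N
  = #|[set Y in S | Y \subset e |: A]|.
Proof.
move=> eA; rewrite -cnt_sum big_split /=.
rewrite [X in _ = X](bigID (fun Z : {set T} => e \in Z)) /= addnC; congr (_ + _)%N; last first.
  apply: eq_bigl => Z; by rewrite -subsetD1 setU1K.
rewrite [X in _ = X](reindex_onto (fun Y => e |: Y) (fun Z => Z :\ e)); last first.
  by move=> Z /= /andP [_ eZ]; rewrite setD1K.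
apply: eq_bigl => Y; rewrite setU11 andbT.
apply/idP/idP.
  move=> YA; have eY : e \notin Y by apply: contra eA; apply: (subsetP YA).
  by rewrite setU1K // eqxx andbT; apply: setUS.
case/andP => H /eqP H2; rewrite -H2.
apply/subsetP => x; rewrite in_setD1 => /andP [xe xeY].
by move: (subsetP H x xeY); rewrite in_setU1 (negbTE xe).
Qed.

Theorem corollary1 (E : finType) (S : {set {set E}}) (e : E) :
  powerful_set S ->
  powerful_multiset ([set: E] :\ e) (contraction (indicator S) e) /\
  powerful_multiset ([set: E] :\ e) (deletion (indicator S) e).
Proof.
move=> PS.
have S0 : set0 \in S.
  have [k Hk] := PS set0.
  have : 0 < #|[set Y in S | Y \subset set0]| by rewrite Hk expn_gt0.
  case/card_gt0P => Y; rewrite !inE subset0 => /andP [YS /eqP YE].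
  by rewrite -YE.
have eD : forall X : {set E}, e \notin ([set: E] :\ e) :\: X.
  by move=> X; rewrite !inE eqxx andbF.
split; split.
- by rewrite /contraction /indicator S0.
- move=> X _.
  rewrite /contraction !cnt_sum.
  have [a Ha] := PS ([set: E] :\ e); have [b Hb] := PS (([set: E] :\ e) :\: X).
  by rewrite Ha Hb; exists (a%:Z - b%:Z)%R; apply: ratio2.
- by rewrite /deletion /indicator S0.
- move=> X _.
  rewrite !del_sum //; last by rewrite !inE eqxx.
  have [a Ha] := PS (e |: ([set: E] :\ e)); have [b Hb] := PS (e |: (([set: E] :\ e) :\: X)).
  by rewrite Ha Hb; exists (a%:Z - b%:Z)%R; apply: ratio2.
Qed.
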